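(* Let $c$ be a natural number and let $X$ be a finite set of natural numbers, all greater than $2$, which is $(\omega^{c+3}+\omega^3+c+4)$-large. Then every colouring $C\colon[X]^2\to\{0,\dots,c-1\}$ has a homogeneous set $H\subseteq X$ (i.e. $C$ is constant on $[H]^2$) with $|H|>\min H$.
   Context: Ordinals are notations below $\varepsilon_0$: formal sums $\omega^{\alpha_0}+\dots+\omega^{\alpha_n}$ with non-increasing exponents, ordered lexicographically. $+$ is ordinal addition, $k=1+\dots+1$ with $1=\omega^0$, and $\omega=\omega^1$. Fundamental sequences, for $\alpha=\omega^{\alpha_0}+\dots+\omega^{\alpha_n}$ and $x\in\mathbb{N}$: $0[x]=0$. If $\alpha_n=0$ then $\alpha[x]=\omega^{\alpha_0}+\dots+\omega^{\alpha_{n-1}}$. If $\alpha_n=\beta+1$ then $\alpha[x]=\omega^{\alpha_0}+\dots+\omega^{\alpha_{n-1}}+\omega^\beta\cdot x$ ($x$ copies of $\omega^\beta$). If $\alpha_n$ is a nonzero non-successor then $\alpha[x]=\omega^{\alpha_0}+\dots+\omega^{\alpha_{n-1}}+\omega^{\alpha_n[x]}$. A finite set $X=\{x_0<\dots<x_{|X|-1}\}$ is $\alpha$-large if $\alpha[x_0]\cdots[x_{|X|-1}]=0$. $[X]^2$ is the set of 2-element subsets of $X$. *)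

(* Defs.v *)
From mathcomp Require Import all_boot.
Set Implicit Arguments. Unset Strict Implicit. Unset Printing Implicit Defensive.

(* CNF a = C [:: a_0; ...; a_n] denotes omega^a_0 + ... + omega^a_n. *)
Inductive ON : Type := C : seq ON -> ON.

Definition ozero : ON := C [::].
Definition ofin (k : nat) : ON := C (nseq k ozero).
Definition opow (b : ON) : ON := C [:: b].

(* For the last exponent e = a_n:
   e = 0               : drop the last term;
   e = b + 1 (i.e. the last term of e is omega^0, b = e minus that term):
                         replace omega^e by x copies of omega^b;
   e nonzero limit     : replace omega^e by omega^(e[x]). *)
Fixpoint fs (a : ON) (x : nat) {struct a} : ON :=
  match a with
  | C l =>
    let fix go (l : seq ON) : seq ON :=
      match l with
      | [::] => [::]
      | [:: e] =>
          match e with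
          | C [::] => [::]
          | C el =>
              match last ozero el with
              | C [::] => nseq x (C (take (size el).-1 el))
              | _ => [:: fs e x]
              end
          end
      | e :: r => e :: go r
      end
    in C (go l)
  end.

Definition fs_iter (a : ON) (X : seq nat) : ON := foldl fs a X.

(* X (given by its strictly increasing enumeration) is a-large *)
Definition large (a : ON) (X : seq nat) : Prop := fs_iter a X = ozero.

(* Main.v *)
Require Import Defs.
From mathcomp Require Import all_boot zify.
Set Implicit Arguments. Unset Strict Implicit. Unset Printing Implicit Defensive.

Fixpoint stp (L : seq nat) (x : nat) : seq nat :=
  match L with
  | [::] => [::]
  | [:: e] => if e is e'.+1 then nseq x e' else [::]
  | e :: r => e :: stp r x
  end.

Lemma stp_cons e r x : r <> [::] -> stp (e :: r) x = e :: stp r x.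
Proof. by case: r. Qed.

Lemma last_nseq0 n : last ozero (nseq n ozero) = ozero.
Proof. by elim: n. Qed.

Lemma fs_ofin_dummy : True. Proof. done. Qed.
Definition unC (a : ON) := match a with C l => l end.
Lemma fs_cons a l x : l <> [::] -> fs (C (a :: l)) x = C (a :: unC (fs (C l) x)).
Proof. by case: l. Qed.
Lemma fs_ofin L x : fs (C (map ofin L)) x = C (map ofin (stp L x)).
Proof.
elim: L => [//|e r IH].
case: r IH => [|e' r] IH.
  case: e => [//|e] /=.
  rewrite /ofin /= last_nseq0 /ozero /= size_nseq.
  rewrite -/ozero.
  have -> : take e (ozero :: nseq e ozero) = nseq e ozero.
    by rewrite -[ozero :: _]/(nseq e.+1 ozero) take_nseq.
  by rewrite map_nseq.
rewrite map_cons fs_cons // IH (stp_cons e) //.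
Qed.

Lemma stp_cat st l x : l <> [::] -> stp (st ++ l) x = st ++ stp l x.
Proof.
move=> hl; elim: st => [//|e st IH].
rewrite cat_cons stp_cons ?IH //. by case: st {IH} => //; case: l hl.
Qed.

Fixpoint emblkP (P : seq nat -> Prop) (k : nat) (R : seq nat) : Prop :=
  match k with
  | 0 => R = [::]
  | k'.+1 => exists R1 R2, R = R1 ++ R2 /\ P R1 /\ emblkP P k' R2
  end.

Fixpoint eblk (e : nat) (R : seq nat) : Prop :=
  match e with
  | 0 => exists y, R = [:: y]
  | e'.+1 => match R with [::] => False | y :: R' => emblkP (eblk e') y R' end
  end.

Definition emblk e k R := emblkP (eblk e) k R.

Fixpoint pex (L : seq nat) (X : seq nat) : Prop :=
  match X with
  | [::] => L = [::]
  | x :: X' => L <> [::] /\ pex (stp L x) X'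
  end.

Lemma foldl_pex L X : foldl stp L X = [::] -> exists X1 X2, X = X1 ++ X2 /\ pex L X1.
Proof.
elim: X L => [|x X IH] L /=; first by move=> ->; exists [::], [::].
case: (L =P [::]) => [-> _|hL].
  by exists [::], (x :: X).
move/IH => [X1 [X2 [-> h]]]. by exists (x :: X1), X2.
Qed.

Lemma pex_nil X : pex [::] X -> X = [::].
Proof. by case: X => //= x X []. Qed.

Lemma pex_split st l X : l <> [::] -> pex (st ++ l) X ->
  exists X1 X2, X = X1 ++ X2 /\ pex l X1 /\ pex st X2.
Proof.
elim: X l => [|x X IH] l hl /=.
  by move=> /(congr1 size); rewrite size_cat; case: l hl => //= a l _; lia.
move=> [_]; rewrite stp_cat //.
case: (stp l x =P [::]) => [E|hn].
  rewrite E cats0 => h. by exists [:: x], X; rewrite /= E.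
move/(IH _ hn) => [X1 [X2 [-> [h1 h2]]]].
exists (x :: X1), X2; split => //; split => //=.
Qed.

Lemma nseqS_r n (a : nat) : nseq n.+1 a = nseq n a ++ [:: a].
Proof. by elim: n => //= n ->. Qed.

Lemma pex_blk e X : pex [:: e] X -> eblk e X.
Proof.
elim: e X => [|e IH] [|x X] //=.
  by move=> [_ /pex_nil ->]; exists x.
move=> [_] /=. elim: x X => [|k IHk] X /=; first by move/pex_nil.
rewrite -[e :: nseq k e]/(nseq k.+1 e) nseqS_r => /pex_split [//|X1 [X2 [-> [h1 h2]]]].
exists X1, X2; split => //; split; [exact: IH | exact: IHk].
Qed.

Lemma pex_nseq0 k X : pex (nseq k 0) X -> size X = k.
Proof.
elim: k X => [|k IH] X; first by move/pex_nil ->.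
rewrite nseqS_r => /pex_split [//|X1 [X2 [-> [h1 h2]]]].
rewrite size_cat (IH _ h2). move/pex_blk: h1 => [y ->] /=. lia.
Qed.

Lemma large_decomp c X :
  large (C (ofin (c + 3) :: ofin 3 :: nseq (c + 4) ozero)) X ->
  exists A B D J, X = A ++ B ++ D ++ J /\ size A = c + 4 /\ eblk 3 B /\ eblk (c + 3) D.
Proof.
rewrite /large /fs_iter.
have -> : C (ofin (c + 3) :: ofin 3 :: nseq (c + 4) ozero) =
          C (map ofin ([:: c + 3; 3] ++ nseq (c + 4) 0)).
  by rewrite /= map_nseq.
have H : forall L X, foldl fs (C (map ofin L)) X = C (map ofin (foldl stp L X)).
  move=> L0 X0; elim: X0 L0 => [//|x X0 IH] L0.
  by rewrite -[foldl _ _ (x :: X0)]/(foldl fs (fs _ x) X0) fs_ofin IH.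
rewrite H => -[] /(congr1 size); rewrite size_map => /eqP; rewrite size_eq0 => /eqP.
move/foldl_pex => [X1 [J [-> h]]].
have h' : pex ([:: c + 3; 3] ++ nseq (c + 4) 0) X1 by [].
move: h' => /pex_split [|A [R [-> [hA hR]]]]; first by rewrite addn4.
have hR' : pex ([:: c + 3] ++ [:: 3]) R by [].
move: hR' => /pex_split [//|B [D [-> [hB hD]]]].
exists A, B, D, J; split; first by rewrite !catA.
split; first exact: pex_nseq0.
split; exact: pex_blk.
Qed.

Lemma eblk_nil e : ~ eblk e [::].
Proof. by case: e => [|e] //= [y]. Qed.

Lemma eblk_cons e R : eblk e R -> exists y R', R = y :: R'.
Proof. by case: R => [/eblk_nil|y R'] // _; exists y, R'. Qed.

Lemma emblkP_cat P a b R1 R2 : emblkP P a R1 -> emblkP P b R2 -> emblkP P (a + b) (R1 ++ R2).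
Proof.
elim: a R1 => [|a IH] R1 /=; first by move=> ->.
move=> [S1 [S2 [-> [h1 h2]]]] h. exists S1, (S2 ++ R2); split; first by rewrite catA.
by split => //; apply: IH.
Qed.

Lemma emblkP_split P a b R : emblkP P (a + b) R ->
  exists R1 R2, R = R1 ++ R2 /\ emblkP P a R1 /\ emblkP P b R2.
Proof.
elim: a R => [|a IH] R /=; first by move=> h; exists [::], R.
move=> [S1 [S2 [-> [h1 /IH [T1 [T2 [-> [h2 h3]]]]]]]].
exists (S1 ++ T1), T2; split; first by rewrite catA.
split => //. by exists S1, T1.
Qed.

Lemma emblk_nil e k : emblk e k [::] -> k = 0.
Proof.
case: k => //= k [R1 [R2 [E [h _]]]]; by case: R1 E h => [|a R1] //= _ /eblk_nil.
Qed.

Lemma emblkP_sub (P Q : seq nat -> Prop) k R :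
  (forall R, P R -> exists R', subseq R' R /\ Q R') ->
  emblkP P k R -> exists R', subseq R' R /\ emblkP Q k R'.
Proof.
move=> hPQ; elim: k R => [|k IH] R /=; first by move=> ->; exists [::].
move=> [R1 [R2 [-> [/hPQ [R1' [s1 q1]] /IH [R2' [s2 q2]]]]]].
exists (R1' ++ R2'); split; first exact: cat_subseq.
by exists R1', R2'.
Qed.

Lemma eblk_lower_sub e R : eblk e.+1 R -> exists R', subseq R' R /\ eblk e R'.
Proof.
elim: e R => [|e' IH] [|z R0] //.
  by move=> _; exists [:: z]; split; [rewrite sub1seq mem_head | exists z].
move=> /(emblkP_sub IH) [R' [s1 h1]]; exists (z :: R'); split => //.
by rewrite /= eqxx.
Qed.

Lemma eblk_lower e R : eblk e.+1 R ->
  exists R', subseq R' R /\ eblk e R' /\ head 0 R' = head 0 R.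
Proof.
case: R => [|y R] //.
case: e => [|e] h.
  exists [:: y]; split; last by split => //; exists y.
  by rewrite sub1seq mem_head.
move: h => /= /(emblkP_sub (@eblk_lower_sub e)) [R' [s1 h1]].
by exists (y :: R'); rewrite /= eqxx.
Qed.

Lemma eblk_lowerN e d R : e <= d -> eblk d R ->
  exists R', subseq R' R /\ eblk e R' /\ head 0 R' = head 0 R.
Proof.
move=> /subnK <-; elim: (d - e) R => [|k IH] R.
  by move=> h; exists R; rewrite subseq_refl.
rewrite addSn => /eblk_lower [R1 [s1 [h1 e1]]].
move: (IH _ h1) => [R2 [s2 [h2 e2]]].
exists R2; split; first exact: subseq_trans s2 s1.
by rewrite e2 e1.
Qed.

Fixpoint Exf (w : nat -> nat) (l n : nat) (Y : seq nat) : Prop :=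
  match n with
  | 0 => Y = [::]
  | n'.+1 => exists Y1 Y2, Y = Y1 ++ Y2 /\ emblk l (w l) Y1 /\ Exf w l.+1 n' Y2
  end.

Lemma Exf_cat w l a b Y :
  Exf w l (a + b) Y <-> exists Y1 Y2, Y = Y1 ++ Y2 /\ Exf w l a Y1 /\ Exf w (l + a) b Y2.
Proof.
elim: a l Y => [|a IH] l Y /=.
  split; first by move=> h; exists [::], Y; rewrite addn0.
  by move=> [Y1 [Y2 [-> [-> h]]]]; rewrite addn0 in h.
split.
  move=> [Y1 [Y2 [-> [h1 /IH [Z1 [Z2 [-> [h2 h3]]]]]]]].
  exists (Y1 ++ Z1), Z2; split; first by rewrite catA.
  split; first by exists Y1, Z1.
  by rewrite -addSnnS.
move=> [Y1 [Y2 [-> [[Z1 [Z2 [-> [h1 h2]]]] h3]]]].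
exists Z1, (Z2 ++ Y2); split; first by rewrite catA.
split => //; apply/IH; exists Z2, Y2; split => //; split => //.
by rewrite -addSnnS in h3.
Qed.

Lemma Exf_ext u w l n Y : (forall i, l <= i < l + n -> u i = w i) ->
  Exf w l n Y -> Exf u l n Y.
Proof.
elim: n l Y => [//|n IH] l Y hu /= [Y1 [Y2 [-> [h1 h2]]]].
exists Y1, Y2; split => //; split.
  by rewrite hu //; lia.
by apply: IH h2 => i hi; apply: hu; lia.
Qed.

Lemma Exf_zero w l n Y : (forall i, l <= i < l + n -> w i = 0) ->
  Exf w l n Y <-> Y = [::].
Proof.
elim: n l Y => [//|n IH] l Y hw /=.
split.
  move=> [Y1 [Y2 [-> [h1 h2]]]].
  rewrite hw /= in h1; last by lia.
  rewrite h1 /=; apply/(IH l.+1) => // i hi; apply: hw; lia.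
move=> ->; exists [::], [::]; split => //; split; first by rewrite hw //=; lia.
by apply/(IH l.+1) => // i hi; apply: hw; lia.
Qed.

Lemma Exf_one w l Y : Exf w l 1 Y <-> emblk l (w l) Y.
Proof.
split => /=; first by move=> [Y1 [Y2 [-> [h ->]]]]; rewrite cats0.
by move=> h; exists Y, [::]; rewrite cats0.
Qed.

Lemma Exf_loc w N k Y : k < N ->
  Exf w 0 N Y <-> exists Ya p Yc, Y = Ya ++ p ++ Yc /\ Exf w 0 k Ya /\
     emblk k (w k) p /\ Exf w k.+1 (N - k.+1) Yc.
Proof.
move=> hk.
have E : N = k + (1 + (N - k.+1)) by lia.
rewrite {1}E; split.
  move/Exf_cat => [Ya [R [-> [ha /Exf_cat [p [Yc [-> [/Exf_one hp hc]]]]]]]].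
  exists Ya, p, Yc; split => //; split => //; split => //.
  by rewrite add0n addn1 in hc.
move=> [Ya [p [Yc [-> [ha [hp hc]]]]]].
apply/Exf_cat; exists Ya, (p ++ Yc); split => //; split => //.
apply/Exf_cat; exists p, Yc; split => //; split; first exact/Exf_one.
by rewrite add0n addn1.
Qed.

Definition Sx N w X := exists Y, subseq Y X /\ Exf w 0 N Y.

Lemma sorted_sub (s t : seq nat) : subseq s t -> sorted ltn t -> sorted ltn s.
Proof. apply: subseq_sorted; exact: ltn_trans. Qed.

Lemma infix_sub (a b c : seq nat) : subseq b (a ++ b ++ c).
Proof.
apply: (subseq_trans (prefix_subseq b c)); exact: suffix_subseq.
Qed.

Lemma MOD1 N k u w Y : k < N -> (forall i, i != k -> u i = w i) ->
  sorted ltn Y -> Exf w 0 N Y ->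
  (forall p, emblk k (w k) p -> sorted ltn p -> {subset p <= Y} ->
     exists p', subseq p' p /\ emblk k (u k) p') ->
  exists Y', subseq Y' Y /\ Exf u 0 N Y'.
Proof.
move=> hk hu hs /(Exf_loc _ _ hk) [Ya [p [Yc [E [ha [hp hc]]]]]] T.
have sp : subseq p Y by rewrite E; exact: infix_sub.
move: (T p hp (sorted_sub sp hs) (mem_subseq sp)) => [p' [s' hp']].
exists (Ya ++ p' ++ Yc); split.
  by rewrite E; apply: cat_subseq => //; apply: cat_subseq.
apply/(Exf_loc _ _ hk); exists Ya, p', Yc; split => //; split.
  by apply: Exf_ext ha => i hi; apply: hu; rewrite neq_ltn; lia.
split => //; apply: Exf_ext hc => i hi; apply: hu; rewrite neq_ltn; lia.
Qed.

Lemma MOD2 N k u w Y : k.+1 < N -> (forall i, i != k -> i != k.+1 -> u i = w i) ->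
  sorted ltn Y -> Exf w 0 N Y ->
  (forall p q, emblk k (w k) p -> emblk k.+1 (w k.+1) q -> sorted ltn (p ++ q) ->
     {subset p ++ q <= Y} ->
     exists p' q', subseq (p' ++ q') (p ++ q) /\ emblk k (u k) p' /\ emblk k.+1 (u k.+1) q') ->
  exists Y', subseq Y' Y /\ Exf u 0 N Y'.
Proof.
move=> hk hu hs /(Exf_loc _ _ (ltnW hk)) [Ya [p [Yc [E [ha [hp hc]]]]]] T.
have E2 : N - k.+1 = (N - k.+2).+1 by lia.
rewrite E2 /= in hc; move: hc => [q [Yd [E' [hq hd]]]].
have sp : subseq (p ++ q) Y by rewrite E E' (catA p q Yd); exact: infix_sub.
move: (T p q hp hq (sorted_sub sp hs) (mem_subseq sp)) => [p' [q' [s' [hp' hq']]]].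
exists (Ya ++ (p' ++ q') ++ Yd); split.
  rewrite E E' (catA p q Yd); apply: cat_subseq => //; apply: cat_subseq => //.
apply/(Exf_loc _ _ (ltnW hk)); exists Ya, p', (q' ++ Yd); split; first by rewrite !catA.
split.
  by apply: Exf_ext ha => i hi; apply: hu; rewrite neq_ltn; lia.
split => //; rewrite E2 /=; exists q', Yd; split => //; split => //.
apply: Exf_ext hd => i hi; apply: hu; rewrite neq_ltn; lia.
Qed.

Lemma Exf_loc2 w N k Y : k.+1 < N ->
  Exf w 0 N Y <-> exists Ya p q Yd, Y = Ya ++ p ++ q ++ Yd /\ Exf w 0 k Ya /\
     emblk k (w k) p /\ emblk k.+1 (w k.+1) q /\ Exf w k.+2 (N - k.+2) Yd.
Proof.
move=> hk; have E2 : N - k.+1 = (N - k.+2).+1 by lia.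
rewrite (Exf_loc _ _ (ltnW hk)) E2 /=; split.
  move=> [Ya [p [Yc [-> [ha [hp [q [Yd [-> [hq hd]]]]]]]]]].
  by exists Ya, p, q, Yd.
move=> [Ya [p [q [Yd [-> [ha [hp [hq hd]]]]]]]].
exists Ya, p, (q ++ Yd); split => //; split => //; split => //.
by exists q, Yd.
Qed.

Definition lvl (g n : nat) : nat -> nat := fun i => if i == g then n else 0.
Definition fsv (w : nat -> nat) (e x : nat) : nat -> nat :=
  fun i => if i == e then (w i).-1 else if i.+1 == e then w i + x else w i.
Definition low N (w : nat -> nat) e := [/\ e < N, 0 < w e & forall i, i < e -> w i = 0].

Lemma emblkS_inv P k R : emblkP P k.+1 R -> exists R1 R2, R = R1 ++ R2 /\ P R1 /\ emblkP P k R2.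
Proof. by []. Qed.

Lemma EXF_fs N w e x Z : low N w e -> (Exf w 0 N (x :: Z) <-> Exf (fsv w e x) 0 N Z).
Proof.
case=> he hpos hz.
case: e he hpos hz => [|e'] he hpos hz.
- rewrite !(Exf_loc _ _ he); split.
    move=> [Ya [p [Yc [E [Ea [hp hc]]]]]]; rewrite /= in Ea; subst Ya.
    move: hp; rewrite -(prednK hpos) => /emblkS_inv [b [p' [Ep [[y Eb] hp']]]].
    rewrite Ep Eb /= in E; case: E => Exy EZ; subst x Z.
    exists [::], p', Yc; split => //; split => //; split.
      by rewrite /fsv eqxx.
    by apply: Exf_ext hc => i hi; rewrite /fsv; case: eqP => //; lia.
  move=> [Ya [p [Yc [-> [Ea [hp hc]]]]]]; rewrite /= in Ea; subst Ya.
  exists [::], (x :: p), Yc; split => //; split => //; split.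
    rewrite -(prednK hpos) /=; exists [:: x], p; split => //; split; first by exists x.
    by move: hp; rewrite /fsv eqxx.
  by apply: Exf_ext hc => i hi; rewrite /fsv; case: eqP => //; lia.
- rewrite !(Exf_loc2 _ _ he).
  have hz0 : forall Ya, Exf w 0 e' Ya -> Ya = [::].
    by move=> Ya /Exf_zero -> // i hi; apply: hz; lia.
  have hzf : forall i, 0 <= i < 0 + e' -> fsv w e'.+1 x i = 0.
    move=> i hi; rewrite /fsv.
    case: (i =P e'.+1) => [?|_]; first lia.
    case: (i.+1 =P e'.+1) => [?|_]; first lia.
    apply: hz; lia.
  have hz1 : forall Ya, Exf (fsv w e'.+1 x) 0 e' Ya -> Ya = [::].
    by move=> Ya /Exf_zero ->.
  have hw : w e' = 0 by apply: hz.
  split.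
    move=> [Ya [p [q [Yd [E [/hz0 Ea [hp [hq hd]]]]]]]].
    have Ep : p = [::] by move: hp; rewrite hw.
    move: hq; rewrite -(prednK hpos) => /emblkS_inv [b [q' [Eq [hb hq']]]].
    case: b Eq hb => [|y r] // Eq hb.
    rewrite Ea Ep Eq /= in E; case: E => Ey EZ; subst x Z.
    exists [::], r, q', Yd; split; first by rewrite /= catA.
    split; first by apply/Exf_zero.
    split; first by rewrite /fsv ltn_eqF // eqxx hw add0n.
    split; first by rewrite /fsv eqxx.
    by apply: Exf_ext hd => i hi; rewrite /fsv; case: eqP; [lia|case: eqP => //; lia].
  move=> [Ya [p [q [Yd [-> [/hz1 -> [hp [hq hd]]]]]]]].
  exists [::], [::], ((x :: p) ++ q), Yd; split; first by rewrite /= catA.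
  split; first by apply/Exf_zero => // i hi; apply: hz; lia.
  split; first by rewrite hw.
  split.
    rewrite -(prednK hpos) /=; exists (x :: p), q; split => //; split.
      by move: hp; rewrite /fsv ltn_eqF // eqxx hw add0n.
    by move: hq; rewrite /fsv eqxx.
  by apply: Exf_ext hd => i hi; rewrite /fsv; case: eqP; [lia|case: eqP => //; lia].
Qed.

Lemma Sx_ext N u w X : (forall i, i < N -> u i = w i) -> Sx N w X -> Sx N u X.
Proof. move=> h [Y [s hY]]; exists Y; split => //; apply: Exf_ext hY => i hi; apply: h; lia. Qed.

Lemma Sx_zero N w X : (forall i, i < N -> w i = 0) -> Sx N w X.
Proof. move=> h; exists [::]; split; first exact: sub0seq. by apply/Exf_zero => // i hi; apply: h; lia. Qed.

Lemma Exf_nonnil N w Y i : i < N -> 0 < w i -> Exf w 0 N Y -> Y <> [::].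
Proof.
move=> hi hw /(Exf_loc _ _ hi) [Ya [p [Yc [-> [_ [hp _]]]]]] E.
have : p = [::] by case: Ya E => //; case: p hp => //.
by move=> Ep; move: hp; rewrite Ep => /emblk_nil; lia.
Qed.

Lemma Sx_nil N w i : i < N -> 0 < w i -> Sx N w [::] -> False.
Proof.
move=> hi hw [Y [s hY]]; apply: (Exf_nonnil hi hw hY).
by case: Y s {hY}.
Qed.

Lemma Exf_CW u w l n Y : (forall i, l <= i < l + n -> u i <= w i) -> Exf w l n Y ->
  exists Y', subseq Y' Y /\ Exf u l n Y'.
Proof.
elim: n l Y => [|n IH] l Y hu /=; first by move=> ->; exists [::].
move=> [Y1 [Y2 [-> [h1 h2]]]].
have /subnK E : u l <= w l by apply: hu; lia.
move: h1; rewrite -E addnC => /emblkP_split [Z1 [Z2 [-> [hz1 _]]]].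
have [Y2' [s2 h2']] : exists Y2', subseq Y2' Y2 /\ Exf u l.+1 n Y2'.
  by apply: IH h2 => i hi; apply: hu; lia.
exists (Z1 ++ Y2'); split.
  by rewrite -catA; apply: cat_subseq => //; apply: (subseq_trans s2); exact: suffix_subseq.
by exists Z1, Y2'.
Qed.

Lemma CW N u w X : (forall i, i < N -> u i <= w i) -> Sx N w X -> Sx N u X.
Proof.
move=> h [Y [s hY]].
have [Y' [s' hY']] : exists Y', subseq Y' Y /\ Exf u 0 N Y'.
  by apply: Exf_CW hY => i hi; apply: h; lia.
by exists Y'; split => //; exact: subseq_trans s' s.
Qed.

Lemma Sx_sorted N w X : sorted ltn X -> Sx N w X ->
  exists Y, [/\ subseq Y X, sorted ltn Y & Exf w 0 N Y].
Proof. by move=> hs [Y [s h]]; exists Y; split => //; exact: sorted_sub s hs. Qed.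

Lemma LR N w j X : j.+1 < N -> sorted ltn X ->
  Sx N (fun i => w i + (i == j.+1)) X -> Sx N (fun i => w i + (i == j)) X.
Proof.
move=> hj hs /(Sx_sorted hs) [Y [sY sYs hY]].
have [Y' [s' hY']] : exists Y', subseq Y' Y /\ Exf (fun i => w i + (i == j)) 0 N Y'.
  apply: (MOD2 hj _ sYs hY).
    by move=> i h1 h2; rewrite (negbTE h1) (negbTE h2).
  move=> p q hp hq _ _.
  rewrite ltn_eqF // addn0 in hp; rewrite eqxx addn1 in hq.
  move: hq => /emblkS_inv [b [q' [-> [hb hq']]]].
  move: (eblk_lower_sub hb) => [b' [sb hb']].
  exists (p ++ b'), q'; split.
    by rewrite -catA; apply: cat_subseq => //; apply: cat_subseq.
  split.
    rewrite eqxx addn1 -addn1; apply: emblkP_cat => //.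
    by exists b', [::]; rewrite cats0.
  by rewrite gtn_eqF // addn0.
by exists Y'; split => //; exact: subseq_trans s' sY.
Qed.

Lemma LRstar N w i j X : i <= j -> j < N -> sorted ltn X ->
  Sx N (fun k => w k + (k == j)) X -> Sx N (fun k => w k + (k == i)) X.
Proof.
move=> hij hj hs; elim: j hij hj => [|j IH] hij hj.
  by have -> : i = 0 by lia.
case: (i =P j.+1) => [->//|hne] h.
apply: IH; [lia|lia|]. by apply: LR.
Qed.

Lemma SPLIT N w k x X : 0 < k < N -> 0 < w k -> sorted ltn X -> (forall z, z \in X -> x < z) ->
  Sx N w X ->
  Sx N (fun i => if i == k then (w k).-1 else if i.+1 == k then w i + x.+1 else w i) X.
Proof.
case: k => [//|k] /andP [_ hk] hw hs hx /(Sx_sorted hs) [Y [sY sYs hY]].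
have [Y' [s' hY']] : exists Y', subseq Y' Y /\
   Exf (fun i => if i == k.+1 then (w k.+1).-1 else if i.+1 == k.+1 then w i + x.+1 else w i) 0 N Y'.
  apply: (MOD2 hk _ sYs hY).
    by move=> i h1 h2; rewrite (negbTE h2) eqSS (negbTE h1).
  move=> p q hp hq _ hsub.
  move: hq; rewrite -(prednK hw) => /emblkS_inv [b [q' [Eq [hb hq']]]].
  case: b Eq hb => [|v r] // Eq hb.
  have hv : x < v.
    apply: hx; apply: (mem_subseq sY); apply: hsub; rewrite mem_cat Eq; apply/orP; right.
    by rewrite mem_head.
  move: hb => /=; rewrite -(subnK hv) addnC => /emblkP_split [r1 [r2 [Er [hr1 _]]]].
  exists (p ++ r1), q'; split.
    rewrite Eq Er -catA; apply: cat_subseq => //.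
    apply: cat_subseq => //.
    exact: subseq_trans (prefix_subseq r1 r2) (subseq_cons _ v).
  split.
    by rewrite ltn_eqF // eqxx; apply: emblkP_cat.
  by rewrite eqxx.
by exists Y'; split => //; exact: subseq_trans s' sY.
Qed.

Lemma path_min (x : nat) X : path ltn x X -> forall z, z \in X -> x < z.
Proof. by move=> /(order_path_min ltn_trans) /allP. Qed.

Ltac ifcases := repeat (case: eqP => ?; try subst); try lia.

Lemma DEST N w e x X : sorted ltn (x :: X) -> low N w e -> Sx N w (x :: X) -> Sx N (fsv w e x) X.
Proof.
move=> hs hl; have [he hpos hz] := hl.
move=> [Y [sY hY]].
case: Y sY hY => [|y Z] sY hY; first by case: (Exf_nonnil he hpos hY).
case: (y =P x) => [Eyx|hne].
  subst y; exists Z; split; first by move: sY; rewrite /= eqxx.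
  by apply/EXF_fs.
have sX : subseq (y :: Z) X by move: sY => /=; case: eqP => // /esym.
have hsX : sorted ltn X := path_sorted hs.
have hx : forall z, z \in X -> x < z := path_min hs.
have S1 : Sx N w X by exists (y :: Z).
case: e he hpos hz hl => [|e] he hpos hz hl.
  apply: CW S1 => i _; rewrite /fsv; ifcases.
have := SPLIT (N := N) (w := w) (k := e.+1) (x := x) (ltac:(lia)) hpos hsX hx S1.
apply: CW => i _; rewrite /fsv; ifcases.
Qed.

Lemma CONS N A e x X : low N A e -> Sx N (fsv A e x) X -> Sx N A (x :: X).
Proof.
move=> hl [Z [sZ hZ]]; exists (x :: Z); split; first by rewrite /= eqxx.
by apply/(EXF_fs _ _ hl).
Qed.

Lemma low_ex N w : (exists i, i < N /\ 0 < w i) -> exists e, low N w e.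
Proof.
move=> [i [hi hw]].
have ex : exists i, (i < N) && (0 < w i) by exists i; rewrite hi hw.
case: (ex_minnP ex) => e /andP [he hwe] hmin.
exists e; split => // j hj; apply/eqP; rewrite -leqn0 leqNgt; apply/negP => hj'.
have := hmin j; rewrite hj' andbT; move=> /(_ (ltn_trans hj he)); lia.
Qed.

Lemma KL N A B eA x X : sorted ltn (x :: X) -> low N A eA ->
  Sx N (fun i => A i + B i) (x :: X) -> Sx N (fun i => fsv A eA x i + B i) X.
Proof.
move=> hs hlA; have [heA hposA hzA] := hlA.
have hsX : sorted ltn X := path_sorted hs.
have hx : forall z, z \in X -> x < z := path_min hs.
case: (boolP (all (fun i => B i == 0) (iota 0 eA))) => [/allP hB|hB].
  have hB' : forall i, i < eA -> B i = 0.
    by move=> i hi; apply/eqP; apply: hB; rewrite mem_iota; lia.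
  have hl : low N (fun i => A i + B i) eA.
    by split => //; [lia | move=> i hi; rewrite hzA // hB'].
  move/(DEST hs hl); apply: Sx_ext => i _; rewrite /fsv; ifcases.
have [eB hlB] : exists eB, low eA B eB.
  apply: low_ex; move: hB; rewrite -has_predC => /hasP [i]; rewrite mem_iota /= => hi hne.
  by exists i; split; [lia | rewrite lt0n].
have [heB hposB hzB] := hlB.
have hl : low N (fun i => A i + B i) eB.
  by split => //; [lia | lia | move=> i hi; rewrite hzA ?hzB //; lia].
move/(DEST hs hl).
move/(Sx_ext (u := fun i => A i + fsv B eB x i)) => /(_ ltac:(move=> i _; rewrite /fsv; ifcases)) S1.
have := SPLIT (N := N) (w := fun i => A i + fsv B eB x i) (k := eA) (x := x) (X := X) (ltac:(lia)).
move=> /(_ ltac:(rewrite /fsv; ifcases) hsX hx S1) S2.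
have S3 : Sx N (fun i => (if i == eA then (A eA + B eA).-1 else if i.+1 == eA then A i + fsv B eB x i + x
                          else A i + fsv B eB x i) + (i == eA.-1)) X.
  apply: Sx_ext S2 => i _; rewrite /fsv; ifcases.
have := LRstar (N := N) (i := eB) (j := eA.-1) (ltac:(lia)) (ltac:(lia)) hsX S3.
apply: CW => i _; rewrite /fsv; ifcases.
Qed.

Lemma NSP2 N X : sorted ltn X -> forall A B (p : pred nat),
  Sx N (fun i => A i + B i) X -> Sx N A (filter p X) \/ Sx N B (filter (predC p) X).
Proof.
elim: X => [|x X IH] hs A B p h.
- case: (boolP (all (fun i => A i == 0) (iota 0 N))) => [/allP hA|hA].
    by left; apply: Sx_zero => i hi; apply/eqP; apply: hA; rewrite mem_iota; lia.
  move: hA; rewrite -has_predC => /hasP [i]; rewrite mem_iota /= => hi hne.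
  by case: (Sx_nil (N := N) (w := fun i => A i + B i) (i := i) ltac:(lia) ltac:(lia) h).
- have hsX : sorted ltn X := path_sorted hs.
  case: (boolP (all (fun i => A i == 0) (iota 0 N))) => [/allP hA|hA].
    by left; apply: Sx_zero => i hi; apply/eqP; apply: hA; rewrite mem_iota; lia.
  case: (boolP (all (fun i => B i == 0) (iota 0 N))) => [/allP hB|hB].
    by right; apply: Sx_zero => i hi; apply/eqP; apply: hB; rewrite mem_iota; lia.
  have [eA hlA] : exists e, low N A e.
    apply: low_ex; move: hA; rewrite -has_predC => /hasP [i]; rewrite mem_iota /= => hi hne.
    by exists i; split; [lia | rewrite lt0n].
  have [eB hlB] : exists e, low N B e.
    apply: low_ex; move: hB; rewrite -has_predC => /hasP [i]; rewrite mem_iota /= => hi hne.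
    by exists i; split; [lia | rewrite lt0n].
  case: (boolP (p x)) => hpx.
    have := KL hs hlA h => /(IH hsX _ _ p) [h1|h2].
      by left; rewrite /= hpx; apply: CONS h1.
    by right; rewrite /= hpx.
  have h' : Sx N (fun i => B i + A i) (x :: X) by apply: Sx_ext h => i _; lia.
  have h2' := KL hs hlB h'.
  have h3 : Sx N (fun i => A i + fsv B eB x i) X by apply: Sx_ext h2' => i _; lia.
  move: h3 => /(IH hsX _ _ p) [h1|h2].
    by left; rewrite /= (negbTE hpx).
  by right; rewrite /= hpx; apply: CONS h2.
Qed.

Lemma NSPc N c (T : nat -> nat -> nat) (f : nat -> nat) X : sorted ltn X ->
  Sx N (fun i => \sum_(k < c.+1) T k i) X -> (forall z, z \in X -> f z < c.+1) ->
  exists k, k < c.+1 /\ Sx N (T k) (filter (fun z => f z == k) X).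
Proof.
elim: c X => [|c IH] X hs h hf.
  exists 0; split => //.
  have -> : filter (fun z => f z == 0) X = X.
    by apply/all_filterP/allP => z /hf; lia.
  by apply: Sx_ext h => i _; rewrite big_ord1.
have h' : Sx N (fun i => (\sum_(k < c.+1) T k i) + T c.+1 i) X.
  by apply: Sx_ext h => i _; rewrite [RHS]big_ord_recr.
case: (NSP2 hs (fun z => f z != c.+1) h') => [h1|h2].
  have hs1 : sorted ltn (filter (fun z => f z != c.+1) X) by apply: sorted_filter => //; exact: ltn_trans.
  have := IH _ hs1 h1.
  move=> /(_ ltac:(move=> z; rewrite mem_filter => /andP [hn /hf]; lia)) [k [hk hS]].
  exists k; split; first lia.
  rewrite -filter_predI in hS.
  rewrite -(eq_filter (a1 := predI (fun z => f z == k) (fun z => f z != c.+1))) //.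
  by move=> z /=; case: eqP => // ->; rewrite ltn_eqF.
exists c.+1; split => //.
rewrite -(eq_filter (a1 := predC (fun z => f z != c.+1))) //.
by move=> z /=; rewrite negbK.
Qed.

Lemma sorted_cat_lt (b R : seq nat) a z : sorted ltn (b ++ R) -> a \in b -> z \in R -> a < z.
Proof.
move=> hs ha hz.
have : subseq ([:: a] ++ [:: z]) (b ++ R) by apply: cat_subseq; rewrite sub1seq.
by move/sorted_sub => /(_ hs) /=; rewrite andbT.
Qed.

Lemma emblk0_size k R : emblk 0 k R -> size R = k.
Proof.
elim: k R => [|k IH] R /=; first by move=> ->.
by move=> [R1 [R2 [-> [[y ->] /IH]]]] /= ->.
Qed.

Lemma sorted_last_bound s R : sorted ltn (s :: R) -> R <> [::] -> exists z, z \in R /\ s + size R <= z.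
Proof.
elim: R s => [//|r R IH] s /= /andP [hsr hp] _.
case: R IH hp => [|r' R] IH hp.
  by exists r; rewrite mem_head /=; lia.
have [z [hz hb]] := IH r hp ltac:(done).
exists z; split; first by rewrite inE hz orbT.
move: hb => /=; lia.
Qed.

Lemma blk1_bound b : eblk 1 b -> sorted ltn b -> 0 < head 0 b -> exists z, z \in b /\ 2 * head 0 b <= z.
Proof.
case: b => [//|s b] /= hb hs hpos.
have hsz := emblk0_size hb.
have hne : b <> [::] by move=> E; rewrite E /= in hsz; lia.
have [z [hz hbz]] := sorted_last_bound hs hne.
exists z; split; first by rewrite inE hz orbT.
lia.
Qed.

Lemma chain1 k R t : emblk 1 k R -> sorted ltn R -> (forall z, z \in R -> t < z) -> 0 < k ->
  exists z, z \in R /\ 2 ^ k * t.+1 <= z.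
Proof.
elim: k R t => [//|k IH] R t /= [b [R' [ER [hb hR']]]] hs ht _.
have hsb : sorted ltn b by apply: sorted_sub hs; rewrite ER prefix_subseq.
have hsR' : sorted ltn R' by apply: sorted_sub hs; rewrite ER suffix_subseq.
have [s [b' Eb]] := eblk_cons hb.
have hst : t < s by apply: ht; rewrite ER Eb mem_cat mem_head.
have [z1 [hz1 hb1]] := blk1_bound hb hsb ltac:(rewrite Eb /=; lia).
rewrite Eb /= in hb1.
have hz1R : z1 \in R by rewrite ER mem_cat hz1.
case: k IH hR' => [|k] IH hR'.
  by exists z1; split => //; rewrite expn1; lia.
have ht' : forall z, z \in R' -> z1 < z.
  by move=> z hz; apply: (sorted_cat_lt (b := b) (R := R')) => //; rewrite -ER.
have [z [hz hbz]] := IH R' z1 hR' hsR' ht' ltac:(done).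
exists z; split; first by rewrite ER mem_cat hz orbT.
rewrite expnS -mulnA; apply: leq_trans hbz; nia.
Qed.

Lemma blkh_bound h b : 2 <= h -> eblk h b -> sorted ltn b -> 0 < head 0 b ->
  exists z, z \in b /\ 2 ^ (head 0 b) <= z.
Proof.
move=> hh hb hs hpos.
have [b2 [sb [hb2 Eh]]] := eblk_lowerN hh hb.
have hs2 : sorted ltn b2 := sorted_sub sb hs.
case: b2 sb hb2 Eh hs2 => [//|s R] sb hb2 /= Eh hs2.
have [z [hz hbz]] : exists z, z \in R /\ 2 ^ s * s.+1 <= z.
  apply: (chain1 (k := s)) => //; first exact: path_sorted hs2.
    exact: path_min hs2.
  lia.
exists z; split; first by apply: (mem_subseq sb); rewrite inE hz orbT.
rewrite -Eh; apply: leq_trans hbz; rewrite -{1}[2 ^ s]muln1 leq_mul2l; lia.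
Qed.

Definition f2 (a : nat) := 2 ^ a.

Lemma iter_f2_mono k a b : a <= b -> iter k f2 a <= iter k f2 b.
Proof. elim: k => //= k IH hab; rewrite /f2 leq_exp2l //; exact: IH. Qed.

Lemma iter_f2_ge k a : a <= iter k f2 a.
Proof. elim: k => //= k IH; apply: leq_trans IH _; rewrite /f2; exact: ltnW (ltn_expl _ _). Qed.

Lemma chainh h k p t : 2 <= h -> emblk h k p -> sorted ltn p -> (forall z, z \in p -> t < z) -> 0 < k ->
  exists z, z \in p /\ iter k f2 t.+1 <= z.
Proof.
move=> hh; elim: k p t => [//|k IH] p t /= [b [R' [Ep [hb hR']]]] hs ht _.
have hsb : sorted ltn b by apply: sorted_sub hs; rewrite Ep prefix_subseq.
have hsR' : sorted ltn R' by apply: sorted_sub hs; rewrite Ep suffix_subseq.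
have [s [b' Eb]] := eblk_cons hb.
have hst : t < s by apply: ht; rewrite Ep Eb mem_cat mem_head.
have [z1 [hz1 hb1]] := blkh_bound hh hb hsb ltac:(rewrite Eb /=; lia).
rewrite Eb /= in hb1.
have hz1p : z1 \in p by rewrite Ep mem_cat hz1.
have hf1 : f2 t.+1 <= z1 by apply: leq_trans hb1; rewrite /f2 leq_exp2l.
case: k IH hR' => [|k] IH hR'.
  by exists z1.
have ht' : forall z, z \in R' -> z1 < z.
  by move=> z hz; apply: (sorted_cat_lt (b := b) (R := R')) => //; rewrite -Ep.
have [z [hz hbz]] := IH R' z1 hR' hsR' ht' ltac:(done).
exists z; split; first by rewrite Ep mem_cat hz orbT.
apply: leq_trans hbz; rewrite iterSr; apply: iter_f2_mono; lia.
Qed.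

Definition T3 x := 2 ^ (2 ^ (2 ^ x.+1)).

Lemma chain_T3 h k p t : 2 <= h -> 3 <= k -> emblk h k p -> sorted ltn p -> (forall z, z \in p -> t < z) ->
  exists z, z \in p /\ T3 t <= z.
Proof.
move=> hh hk hp hs ht; have [z [hz hb]] := chainh hh hp hs ht ltac:(lia).
exists z; split => //; apply: leq_trans hb.
rewrite -(subnK hk) iterD; apply: leq_trans (iter_f2_ge _ _); done.
Qed.

Lemma three_le x : 3 * x <= 2 ^ x.+1.
Proof.
elim: x => // x IH; rewrite expnS.
case: x IH => // x IH; rewrite expnS in IH *; lia.
Qed.

Lemma expn_base_mono a b n : a <= b -> a ^ n <= b ^ n.
Proof. by case: n => // n; rewrite leq_exp2r. Qed.

Lemma num_bound c s x : c.+1 <= x -> 3 <= x -> s <= x * x -> c.+2 ^ (s + x + 1) <= T3 x.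
Proof.
move=> hc hx hs.
set n := s + x + 1.
have h1 : c.+2 ^ n <= x.+1 ^ n by apply: expn_base_mono.
have h2 : x.+1 ^ n <= (2 ^ x) ^ n by apply: expn_base_mono; exact: ltn_expl.
have h3 : x * n <= x.+1 ^ 3 by rewrite /n; nia.
have h4 : x.+1 ^ 3 <= 2 ^ (3 * x).
  by rewrite mulnC expnM leq_exp2r //; exact: ltn_expl.
have h5 : 3 * x <= 2 ^ x.+1 := three_le x.
apply: (leq_trans h1); apply: (leq_trans h2); rewrite -expnM /T3 leq_exp2l //.
apply: (leq_trans h3); apply: (leq_trans h4); rewrite leq_exp2l //.
Qed.

Lemma shrink h J E q : emblk h.+1 J q -> (forall z, z \in q -> E <= z) ->
  exists q', subseq q' q /\ emblk h (J * E) q'.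
Proof.
elim: J q => [|J IH] q /=; first by move=> ->; exists [::].
move=> [b [q2 [-> [hb hq2]]]] hE.
case: b hb hE => [//|u r] hb hE.
have hu : E <= u by apply: hE; rewrite mem_head.
have hb' : emblk h (E + (u - E)) r by rewrite addnC subnK.
move: hb' => /emblkP_split [r1 [r2 [Er [hr1 _]]]]; rewrite Er.
have [q2' [s2 h2]] := IH q2 hq2 (fun z hz => hE z ltac:(by rewrite inE mem_cat hz !orbT)).
exists (r1 ++ q2'); split.
  apply: cat_subseq => //.
  exact: subseq_trans (prefix_subseq r1 r2) (subseq_cons _ u).
by rewrite mulSn; apply: emblkP_cat.
Qed.

Lemma GROW N w h x X J E : h.+1 < N -> 2 <= h -> sorted ltn X -> (forall z, z \in X -> x < z) ->
  3 <= w h -> J <= w h.+1 -> E <= T3 x -> Sx N w X ->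
  Sx N (fun i => if i == h then w h + J * E else if i == h.+1 then w h.+1 - J else w i) X.
Proof.
move=> hN hh hs hx hwh hJ hE /(Sx_sorted hs) [Y [sY sYs hY]].
have [Y' [s' hY']] : exists Y', subseq Y' Y /\
   Exf (fun i => if i == h then w h + J * E else if i == h.+1 then w h.+1 - J else w i) 0 N Y'.
  apply: (MOD2 hN _ sYs hY).
    by move=> i h1 h2; rewrite (negbTE h1) (negbTE h2).
  move=> p q hp hq hspq hsub.
  have hsp : sorted ltn p by apply: sorted_sub hspq; exact: prefix_subseq.
  have hpx : forall z, z \in p -> x < z.
    by move=> z hz; apply: hx; apply: (mem_subseq sY); apply: hsub; rewrite mem_cat hz.
  have [z0 [hz0 hbz0]] := chain_T3 hh hwh hp hsp hpx.
  move: hq; rewrite -(subnK hJ) addnC => /emblkP_split [q1 [q2 [Eq [hq1 hq2]]]].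
  have hq1E : forall z, z \in q1 -> E <= z.
    move=> z hz; apply: (leq_trans hE); apply: (leq_trans hbz0); apply: ltnW.
    by apply: (sorted_cat_lt (b := p) (R := q)) => //; rewrite Eq mem_cat hz.
  have [q1' [s1 h1]] := shrink hq1 hq1E.
  exists (p ++ q1'), q2; split.
    by rewrite Eq -catA; apply: cat_subseq => //; apply: cat_subseq.
  split.
    by rewrite eqxx; apply: emblkP_cat.
  by rewrite gtn_eqF // eqxx addKn.
by exists Y'; split => //; exact: subseq_trans s' sY.
Qed.

Lemma sum_upd c k (F F' : nat -> nat) : k < c -> (forall i, i != k -> F' i = F i) ->
  \sum_(i <- iota 0 c) F' i + F k = \sum_(i <- iota 0 c) F i + F' k.
Proof.
move=> hk hF.
have hin : k \in iota 0 c by rewrite mem_iota; lia.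
rewrite (bigD1_seq k hin (iota_uniq 0 c)) (bigD1_seq k hin (iota_uniq 0 c)) /=.
rewrite (eq_bigr F) => [|i /hF //]. lia.
Qed.

Lemma term_le_sum c k (F : nat -> nat) : k < c -> F k <= \sum_(i <- iota 0 c) F i.
Proof.
move=> hk; have hin : k \in iota 0 c by rewrite mem_iota; lia.
rewrite (bigD1_seq k hin (iota_uniq 0 c)) /=; lia.
Qed.

Lemma sum_bool_le c (b : nat -> bool) : \sum_(i <- iota 0 c) (b i : nat) <= c.
Proof.
have h : \sum_(i <- iota 0 c) (b i : nat) <= \sum_(i <- iota 0 c) 1.
  by apply: leq_sum => i _; case: (b i).
by rewrite sum1_size size_iota in h.
Qed.

Lemma sorted_rcons_lt (s : seq nat) x : sorted ltn s -> (forall p, p \in s -> p < x) -> sorted ltn (rcons s x).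
Proof.
case: s => [//|a s] /= hs hx; rewrite rcons_path hs /=.
by apply: hx; rewrite mem_last.
Qed.

Lemma hom_rcons (col : nat -> nat -> nat) k (s : seq nat) x :
  (forall p q, p \in s -> q \in s -> p < q -> col p q = k) ->
  (forall p, p \in s -> p < x /\ col p x = k) ->
  forall p q, p \in rcons s x -> q \in rcons s x -> p < q -> col p q = k.
Proof.
move=> h1 h2 p q; rewrite !mem_rcons !inE.
case/orP => [/eqP ->|hp]; case/orP => [/eqP ->|hq]; first lia.
- by move=> hlt; have [hqx _] := h2 q hq; lia.
- by move=> _; have [_ ->] := h2 p hp.
- exact: h1.
Qed.

Definition cntH (H : nat -> seq nat) k := (head 0 (H k)).+1 - size (H k).
Definition ocH c (H : nat -> seq nat) := \sum_(k <- iota 0 c) ((H k == [::]) : nat).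
Definition scH c (H : nat -> seq nat) := \sum_(k <- iota 0 c) (if H k == [::] then 0 else cntH H k).
Definition Kf c s := c.+1 ^ s.+1.

Definition answer (X : seq nat) (col : nat -> nat -> nat) :=
  exists L : seq nat,
    [/\ sorted ltn L, {subset L <= X}, L != [::],
        (exists k, forall x y, x \in L -> y \in L -> x < y -> col x y = k)
      & head 0 L < size L].

Definition Inv c (X : seq nat) (col : nat -> nat -> nat) (Y : seq nat) (H : nat -> seq nat) :=
  [/\ sorted ltn Y, {subset Y <= X} & forall z, z \in Y -> c + 7 <= z] /\
  (forall k, k < c -> sorted ltn (H k) /\ {subset H k <= X}) /\
  (forall k, k < c -> forall p z, p \in H k -> z \in Y -> p < z /\ col p z = k) /\
  (forall k, k < c -> forall p q, p \in H k -> q \in H k -> p < q -> col p q = k) /\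
  (forall k, k < c -> H k != [::] -> size (H k) <= head 0 (H k)) /\
  (forall z, z \in Y -> scH c H <= z * z) /\
  Sx (c + 3) (lvl (ocH c H).+2 (Kf c (scH c H))) Y.

Lemma Inv_nonnil c X col Y H : Inv c X col Y H -> Y <> [::].
Proof.
move=> [_ [_ [_ [_ [_ [_ h]]]]]] E; subst Y.
have hg : (ocH c H).+2 < c + 3 by have := sum_bool_le c (fun k => H k == [::]); rewrite /ocH; lia.
apply: (Sx_nil (i := (ocH c H).+2) hg _ h).
by rewrite /lvl eqxx /Kf expn_gt0.
Qed.

Lemma pow_ge c s : 0 < s -> c.+1 <= c.+1 ^ s.
Proof. by case: s => // s _; rewrite expnS -{1}[c.+1]muln1 leq_mul2l expn_gt0. Qed.

Lemma STEP c' X col Y H x Y' : sorted ltn X ->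
  (forall x y, x \in X -> y \in X -> x < y -> col x y < c'.+1) ->
  Inv c'.+1 X col Y H -> Y = x :: Y' ->
  answer X col \/ exists Y2 H2, size Y2 <= size Y' /\ Inv c'.+1 X col Y2 H2.
Proof.
set c := c'.+1 => hXs hcol [[hYs hYX hY7] [hH1 [hH2 [hH3 [hH4 [hH5 hH6]]]]]] EY.
subst Y.
have hxX : x \in X by apply: hYX; rewrite mem_head.
have hx7 : c + 7 <= x by apply: hY7; rewrite mem_head.
have hY'x : forall z, z \in Y' -> x < z := path_min hYs.
have hY's : sorted ltn Y' := path_sorted hYs.
case: (boolP (has (fun k => (H k != [::]) && (size (H k) == head 0 (H k))) (iota 0 c))).
  move=> /hasP [k]; rewrite mem_iota add0n => /andP [_ hk] /andP [hne /eqP hsz].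
  left; exists (rcons (H k) x); split.
  - apply: sorted_rcons_lt; first by case: (hH1 k hk).
    by move=> p hp; case: (hH2 k hk p x hp (mem_head _ _)).
  - move=> z; rewrite mem_rcons inE => /orP [/eqP ->//|hz]; by case: (hH1 k hk) => _; apply.
  - by case: (H k) => //.
  - exists k; apply: hom_rcons; first exact: hH3.
    by move=> p hp; apply: hH2 => //; rewrite mem_head.
  - rewrite size_rcons hsz; case: (H k) hne => //.
move=> hnw.
have hnw' : forall k, k < c -> H k != [::] -> size (H k) < head 0 (H k).
  move=> k hk hne; move: hnw => /hasPn /(_ k); rewrite mem_iota add0n hk hne /= => /(_ isT) h.
  by have := hH4 k hk hne; rewrite leq_eqVlt (negbTE h).
set o := ocH c H; set s := scH c H; set K := Kf c s.
have ho : o <= c by apply: sum_bool_le.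
have hgN : o.+2 < c + 3 by lia.
have hK : c.+1 <= K by apply: pow_ge.
have hl : low (c + 3) (lvl o.+2 K) o.+2.
  by split => //; [rewrite /lvl eqxx; lia | move=> i hi; rewrite /lvl ltn_eqF].
have S1 := DEST hYs hl hH6.
have hsx : s <= x * x by apply: hH5; rewrite mem_head.
set E := Kf c (s + x).
have hE : E <= T3 x.
  have h := num_bound (c := c') (x := x) (ltac:(rewrite /c in hx7; lia)) (ltac:(lia)) hsx.
  by rewrite /E /Kf -[(s + x).+1]addn1.
set T := fun k i => if H k == [::] then lvl o.+1 E i else lvl o.+2 (Kf c s.-1) i.
have hclosed : forall k, k < c -> H k != [::] -> 0 < s.
  move=> k hk hne.
  have h : cntH H k <= s.
    by have := term_le_sum (fun j => if H j == [::] then 0 else cntH H j) hk; rewrite /= (negbTE hne).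
  have := hH4 k hk hne; rewrite /cntH in h; lia.
have Tg : \sum_(k < c) T k o.+2 <= K.-1 - c.
  have hB : forall k : 'I_c, T k o.+2 <= (if s == 0 then 0 else Kf c s.-1).
    move=> k; rewrite /T /lvl; case: ifP => hk0.
      by rewrite gtn_eqF.
    rewrite eqxx; case: eqP => // hs0; have := hclosed k (ltn_ord k) (negbT hk0); lia.
  have hS : \sum_(k < c) T k o.+2 <= \sum_(k < c) (if s == 0 then 0 else Kf c s.-1).
    by apply: leq_sum => k _; apply: hB.
  apply: (leq_trans hS); rewrite sum_nat_const card_ord.
  case: eqP => [_|hs0]; first lia.
  have Es : s.+1 = (s.-1.+1).+1 by lia.
  rewrite /K /Kf Es [c.+1 ^ s.-1.+2]expnS.
  have := pow_ge c (ltn0Sn s.-1); lia.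
have Tgm : \sum_(k < c) T k o.+1 <= c * E.
  have hB : forall k : 'I_c, T k o.+1 <= E.
    by move=> k; rewrite /T /lvl; case: ifP => _; rewrite ?eqxx // ltn_eqF.
  have hS : \sum_(k < c) T k o.+1 <= \sum_(k < c) E by apply: leq_sum => k _; apply: hB.
  by apply: (leq_trans hS); rewrite sum_nat_const card_ord.
have Toth : forall i, i != o.+1 -> i != o.+2 -> \sum_(k < c) T k i = 0.
  move=> i h1 h2; apply: big1 => k _; rewrite /T /lvl (negbTE h1) (negbTE h2); by case: ifP.
have S2 : Sx (c + 3) (fun i => \sum_(k < c) T k i) Y'.
  case: (posnP o) => [ho0|ho0].
    apply: CW S1 => i _; rewrite /fsv /lvl.
    case: (i =P o.+2) => [->|hi2]; first by move: Tg; rewrite ?eqxx; lia.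
    case: (i.+1 =P o.+2) => [[->]|hi1].
      rewrite big1 // => k _; rewrite /T /lvl.
      have hk := ltn_ord k.
      have : H k != [::].
        apply/negP => /eqP hk0.
        have := term_le_sum (fun j => ((H j == [::]) : nat)) hk; rewrite /= hk0 eqxx.
        rewrite -/(ocH c H) -/o ho0; lia.
      by move=> /negbTE ->; rewrite ltn_eqF.
    rewrite Toth //; apply/eqP => h; [apply: hi1 | apply: hi2]; by rewrite h.
  have S1' := GROW (N := c + 3) (w := fsv (lvl o.+2 K) o.+2 x) (h := o.+1) (x := x) (X := Y') (J := c) (E := E) (ltac:(lia)) (ltac:(lia)) hY's hY'x
    (ltac:(rewrite /fsv /lvl ltn_eqF // eqxx; lia)) (ltac:(rewrite /fsv /lvl !eqxx; lia)) hE S1.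
  apply: CW S1' => i _.
  case: (i =P o.+1) => [->|hi1].
    by move: Tgm; rewrite /fsv /lvl ltn_eqF // eqxx; lia.
  case: (i =P o.+2) => [->|hi2].
    by move: Tg; rewrite /fsv /lvl eqxx; lia.
  by rewrite Toth; apply/eqP.
have hcolY : forall z, z \in Y' -> col x z < c'.+1.
  move=> z hz; apply: hcol => //; first by apply: hYX; rewrite inE hz orbT.
  exact: hY'x.
have [k [hk Sk]] := NSPc hY's S2 hcolY.
set Y2 := filter (fun z => col x z == k) Y'.
set H2 := fun k' => if k' == k then rcons (H k) x else H k'.
have hH2k : H2 k = rcons (H k) x by rewrite /H2 eqxx.
have hH2o : forall k', k' != k -> H2 k' = H k' by move=> k' hk'; rewrite /H2 (negbTE hk').
have hY2 : forall z, z \in Y2 -> z \in Y' /\ col x z = k.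
  by move=> z; rewrite mem_filter => /andP [/eqP -> ->].
have hHkx : forall p, p \in H k -> p < x /\ col p x = k.
  by move=> p hp; apply: hH2 => //; rewrite mem_head.
have hH2ne : H2 k != [::] by rewrite hH2k; case: (H k).
have hoc := sum_upd (F := fun j => ((H j == [::]) : nat)) (F' := fun j => ((H2 j == [::]) : nat)) hk
              (fun j hj => congr1 (fun l => ((l == [::]) : nat)) (hH2o j hj)).
have hsc := sum_upd (F := fun j => if H j == [::] then 0 else cntH H j)
              (F' := fun j => if H2 j == [::] then 0 else cntH H2 j) hk
              (fun j hj => congr1 (fun l => if l == [::] then 0 else (head 0 l).+1 - size l) (hH2o j hj)).
rewrite -/(ocH c H2) -/(ocH c H) -/o (negbTE hH2ne) in hoc.
rewrite -/(scH c H2) -/(scH c H) -/s (negbTE hH2ne) in hsc.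
have hcnt2 : cntH H2 k = (head 0 (rcons (H k) x)).+1 - (size (H k)).+1 by rewrite /cntH hH2k size_rcons.
have [oc2 sc2] : (ocH c H2).+2 = (if H k == [::] then o.+1 else o.+2) /\
                 scH c H2 = (if H k == [::] then s + x else s.-1).
  case: eqP hoc hsc hcnt2 => [hk0|hk0] hoc hsc hcnt2.
    by rewrite hk0 /= in hcnt2; split; lia.
  have hkne : H k != [::] by apply/eqP.
  have := hnw' k hk hkne.
  have : head 0 (rcons (H k) x) = head 0 (H k) by case: (H k) hkne.
  move=> hh; rewrite hh in hcnt2; rewrite /cntH in hsc; rewrite hH2k size_rcons hh in hsc; split; lia.
right; exists Y2, H2; split; first by rewrite size_filter count_size.
split.
  split; first by apply: sorted_filter => //; exact: ltn_trans.
    by move=> z /hY2 [hz _]; apply: hYX; rewrite inE hz orbT.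
  by move=> z /hY2 [hz _]; apply: hY7; rewrite inE hz orbT.
split.
  move=> k' hk'; case: (k' =P k) => [->|/eqP hne]; last by rewrite hH2o //; apply: hH1.
  rewrite hH2k; split.
    apply: sorted_rcons_lt; first by case: (hH1 k hk).
    by move=> p /hHkx [].
  by move=> z; rewrite mem_rcons inE => /orP [/eqP ->//|hz]; case: (hH1 k hk) => _; apply.
split.
  move=> k' hk' p z hp /hY2 [hz hcz]; have hzY : z \in x :: Y' by rewrite inE hz orbT.
  case: (k' =P k) => [Ek|/eqP hne]; last by rewrite hH2o // in hp; apply: hH2.
  subst k'; rewrite hH2k mem_rcons inE in hp.
  case/orP: hp => [/eqP ->|hp]; first by split => //; exact: hY'x.
  exact: hH2.
split.
  move=> k' hk'; case: (k' =P k) => [->|/eqP hne]; last by rewrite hH2o //; apply: hH3.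
  by rewrite hH2k; apply: hom_rcons; [apply: hH3 | exact: hHkx].
split.
  move=> k' hk'; case: (k' =P k) => [->|/eqP hne]; last by rewrite hH2o //; apply: hH4.
  move=> _; rewrite hH2k size_rcons; case: (H k =P [::]) => [hk0|hk0].
    rewrite hk0 /=; lia.
  have hkne : H k != [::] by apply/eqP.
  have := hnw' k hk hkne; case: (H k) hkne => //.
split.
  move=> z /hY2 [hz _]; rewrite sc2; case: ifP => _.
    have := hY'x z hz; nia.
  have := hH5 z ltac:(by rewrite inE hz orbT); lia.
apply: Sx_ext Sk => i _; rewrite oc2 sc2 /T; by case: ifP.
Qed.

Lemma GAME c' X col : sorted ltn X ->
  (forall x y, x \in X -> y \in X -> x < y -> col x y < c'.+1) ->
  forall n Y H, size Y <= n -> Inv c'.+1 X col Y H -> answer X col.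
Proof.
move=> hXs hcol; elim=> [|n IH] Y H hsz hI.
  by case: Y hsz hI => // _ /Inv_nonnil.
case: Y hsz hI => [|x Y'] hsz hI; first by case: (Inv_nonnil hI).
case: (STEP hXs hcol hI (erefl _)) => [//|[Y2 [H2 [hs2 hI2]]]].
apply: IH hI2; move: hsz => /=; lia.
Qed.

Lemma bound_after (A : seq nat) t z : sorted ltn A -> (forall a, a \in A -> t <= a) -> t <= z ->
  (forall a, a \in A -> a < z) -> t + size A <= z.
Proof.
elim: A t => [|a A IH] t /=; first by rewrite addn0.
move=> hs ht htz hz.
have hta : t <= a by apply: ht; rewrite mem_head.
have haz : a < z by apply: hz; rewrite mem_head.
have := IH t.+1 (path_sorted hs).
move=> /(_ _ ltac:(lia)).
have hA : forall b, b \in A -> t.+1 <= b.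
  by move=> b hb; have := path_min hs hb; lia.
move=> /(_ hA) /(_ (fun b hb => hz b ltac:(by rewrite inE hb orbT))); lia.
Qed.

Theorem lemma4p3 (c : nat) (X : seq nat)
  (HXs : sorted ltn X)
  (HX2 : forall x, x \in X -> 2 < x)
  (HXl : large (C (ofin (c + 3) :: ofin 3 :: nseq (c + 4) ozero)) X)
  (col : nat -> nat -> nat)
  (Hcol : forall x y, x \in X -> y \in X -> x < y -> col x y < c) :
  exists H : seq nat,
    [/\ sorted ltn H, {subset H <= X}, H != [::],
        (exists k, forall x y, x \in H -> y \in H -> x < y -> col x y = k)
      & head 0 H < size H].
Proof.
have [A [B [D [J [EX [hA [hB hD]]]]]]] := large_decomp HXl.
have hAX : forall a, a \in A -> a \in X by move=> a ha; rewrite EX mem_cat ha.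
have hAs : sorted ltn A by apply: sorted_sub HXs; rewrite EX prefix_subseq.
case: c Hcol hA hD HXl => [|c'] Hcol hA hD _.
  move: hA hAX hAs; case: A EX => [|a0 [|a1 A']] // EX hA hAX hAs.
  have h01 : a0 < a1 by move: hAs => /= /andP [].
  have := Hcol a0 a1 (hAX a0 (mem_head _ _)) (hAX a1 ltac:(by rewrite !inE eqxx orbT)) h01.
  by [].
case: D EX hD => [//|d R'] EX hD.
have hR'X : subseq R' X.
  rewrite EX; apply: (subseq_trans _ (suffix_subseq A _)); apply: (subseq_trans _ (suffix_subseq B _)).
  by apply: (subseq_trans (prefix_subseq R' J)); apply: subseq_cons.
have hR's : sorted ltn R' := sorted_sub hR'X HXs.
have hbig : forall z, z \in d :: R' -> c'.+1 + 7 <= z.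
  move=> z hz.
  have hzX : z \in X by rewrite EX !mem_cat hz !orbT.
  have : 3 + size A <= z.
    apply: bound_after => //.
    - by move=> a /hAX /HX2.
    - by have := HX2 z hzX.
    - move=> a ha; apply: (sorted_cat_lt (b := A) (R := B ++ (d :: R') ++ J)); rewrite -?EX //.
      by rewrite !mem_cat hz !orbT.
  rewrite hA; lia.
have hd : c'.+2 <= d by have := hbig d (mem_head _ _); lia.
rewrite addn3 /= in hD.
have hD' : emblk c'.+3 (c'.+2 + (d - c'.+2)) R' by rewrite subnKC.
move: hD' => /emblkP_split [R1 [R2 [ER [hR1 _]]]].
set H0 := fun _ : nat => [::] : seq nat.
have hoc : ocH c'.+1 H0 = c'.+1.
  by rewrite /ocH /H0 (eq_bigr (fun _ => 1)) // sum1_size size_iota.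
have hsc : scH c'.+1 H0 = 0.
  by rewrite /scH /H0 big1.
have hI : Inv c'.+1 X col R' H0.
  split.
    split => //; first by apply: mem_subseq.
    by move=> z hz; apply: hbig; rewrite inE hz orbT.
  do 4 (split; first by []).
  split; first by move=> z _; rewrite hsc.
  rewrite hoc hsc; exists R1; split; first by rewrite ER prefix_subseq.
  apply/(Exf_loc _ _ (ltac:(lia) : c'.+3 < c'.+1 + 3)).
  exists [::], R1, [::]; split; first by rewrite cats0.
  split; first by apply/Exf_zero => // i hi; rewrite /lvl ltn_eqF //; lia.
  split; first by rewrite /lvl eqxx /Kf expn1.
  by apply/Exf_zero => // i hi; rewrite /lvl gtn_eqF //; lia.
have [L hL] := GAME HXs Hcol (leqnn _) hI.
by exists L.
Qed.
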